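(* For each $m\ge0$ and $k\ge1$ there exists $R$ such that for all $S,T\ge R$, $$X_{S,T}X_{S,T}\equiv^m_k X_{S,T}\,\mathbf{a}\,X_{S,T},$$ where $X_{S,T}=(v^S\mathbf{a}v^S\mathbf{b}v^S)^T$.
   Context: Fix $r,s\ge1$ and the alphabet $B=\{a_1,\dots,a_r,b_1,\dots,b_s,c_1,\dots,c_{2r+2s}\}$. Let $v=c_1a_1c_2\,c_3a_2c_4\cdots c_{2r-1}a_rc_{2r}\,c_{2r+1}b_1c_{2r+2}\cdots c_{2r+2s-1}b_sc_{2r+2s}$, $\mathbf{a}=a_1\cdots a_r$, $\mathbf{b}=b_1\cdots b_s$. For $R>0$, an $R$-word is a word obtained by concatenating factors from $\{\mathbf{a},\mathbf{b},v^R\}$ such that the first and last factors are $v^R$ and among any two consecutive factors at least one is $v^R$ (this factorization is unique). For $R>2m$, the $m$-neighborhoods of an $R$-word are: each factor $v^m\mathbf{a}v^m$ or $v^m\mathbf{b}v^m$ surrounding one of the factors $\mathbf{a}$ or $\mathbf{b}$ of the factorization, together with the prefix $v^m$ and the suffix $v^m$ of the word. Marked $R$-words $(w_1,i_1),(w_2,i_2)$ are $\equiv^m_0$-equivalent if $w_1(i_1)=w_2(i_2)$ and either $i_1,i_2$ lie at the same position within identical $m$-neighborhoods, or neither lies in any $m$-neighborhood. The basic game on marked words: in each round Player 1 picks one word and moves its pebble to a different position; Player 2 must move the pebble in the other word in the same direction, onto the same letter, such that the set of letters strictly jumped over is the same in both words. The $m$-enhanced game additionally requires that after every round the current marked words are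 $\equiv^m_0$-equivalent. For unmarked $R$-words $w_1,w_2$, $w_1\equiv^m_k w_2$ means Player 2 has a winning strategy in the $k$-round $m$-enhanced game in which, in the first round, Player 1 places a pebble on a position of either word and Player 2 responds in the other so that the resulting marked words are $\equiv^m_0$-equivalent, after which $k-1$ further rounds of the $m$-enhanced game are played; Player 2 wins if she responds legally in every round. *)

(* Defs.v *)
From HB Require Import structures.
From mathcomp Require Import all_boot.
Set Implicit Arguments. Unset Strict Implicit. Unset Printing Implicit Defensive.

(* Letters of the alphabet B: a_i, b_j, c_l (1-based indices as in the paper).
   Only the indices a_1..a_r, b_1..b_s, c_1..c_{2r+2s} are ever used. *)
Definition letter := (nat + nat + nat)%type.
Definition la (i : nat) : letter := inl (inl i).
Definition lb (j : nat) : letter := inl (inr j).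
Definition lc (l : nat) : letter := inr l.
Definition word := seq letter.

Section Words.
Variables r s : nat.

Definition vw : word :=
  flatten [seq [:: lc (2*i - 1); la i; lc (2*i)] | i <- iota 1 r] ++
  flatten [seq [:: lc (2*r + 2*j - 1); lb j; lc (2*r + 2*j)] | j <- iota 1 s].
Definition aw : word := [seq la i | i <- iota 1 r].
Definition bw : word := [seq lb j | j <- iota 1 s].
Definition vpow (n : nat) : word := flatten (nseq n vw).

Inductive factor := Fa | Fb | Fv of nat.
Definition fword (f : factor) : word :=
  match f with Fa => aw | Fb => bw | Fv n => vpow n end.
Definition word_of (fs : seq factor) : word := flatten (map fword fs).

Definition is_vfac (f : factor) := if f is Fv _ then true else false.
Definition is_Rword (R : nat) (fs : seq factor) : Prop :=
  [/\ (forall i, i < size fs -> if nth Fa fs i is Fv n then R <= n else True) /\ (forall i, i.+1 < size fs ->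
        is_vfac (nth Fa fs i) || is_vfac (nth Fa fs i.+1)),
      is_vfac (head Fa fs) & is_vfac (last Fa fs)].

Inductive nkind := NPre | NSuf | NA | NB.
Definition nkind_code (k : nkind) : nat :=
  match k with NPre => 0 | NSuf => 1 | NA => 2 | NB => 3 end.
Definition nkind_decode (n : nat) : nkind :=
  match n with 0 => NPre | 1 => NSuf | 2 => NA | _ => NB end.
Lemma nkind_codeK : cancel nkind_code nkind_decode. Proof. by case. Qed.
HB.instance Definition _ := Equality.copy nkind (can_type nkind_codeK).

(* neighborhoods around the a/b factors: (kind, start position, length) *)
Fixpoint nbhds_aux (m pos : nat) (fs : seq factor) : seq (nkind * nat * nat) :=
  match fs with
  | [::] => [::]
  | f :: fs' =>
    let rest := nbhds_aux m (pos + size (fword f)) fs' in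
    match f with
    | Fa => (NA, pos - m * size vw, m * size vw + size aw + m * size vw) :: rest
    | Fb => (NB, pos - m * size vw, m * size vw + size bw + m * size vw) :: rest
    | Fv _ => rest
    end
  end.

Definition nbhds (m : nat) (fs : seq factor) : seq (nkind * nat * nat) :=
  (NPre, 0, m * size vw)
  :: (NSuf, size (word_of fs) - m * size vw, m * size vw)
  :: nbhds_aux m 0 fs.

Definition locate (m : nat) (fs : seq factor) (p : nat) : option (nkind * nat) :=
  match [seq x <- nbhds m fs | (x.1.2 <= p) && (p < x.1.2 + x.2)] with
  | x :: _ => Some (x.1.1, p - x.1.2)
  | [::] => None
  end.

Definition equiv0 (m : nat) (fs1 : seq factor) (p1 : nat) (fs2 : seq factor) (p2 : nat) : Prop :=
  onth (word_of fs1) p1 = onth (word_of fs2) p2 /\ locate m fs1 p1 = locate m fs2 p2.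

Definition jumped (w : word) (p p' : nat) : word :=
  drop (minn p p').+1 (take (maxn p p') w).

(* Player 2's answer q -> q' in w' to Player 1's move p -> p' in w is legal
   for the basic game *)
Definition basic_ok (w : word) (p p' : nat) (w' : word) (q q' : nat) : Prop :=
  [/\ q' < size w', (p' < p) = (q' < q), (p < p') = (q < q'),
      onth w p' = onth w' q' & jumped w p p' =i jumped w' q q'].

(* Player 2 wins the remaining k rounds of the m-enhanced game from
   the marked words (word_of fs1, p1), (word_of fs2, p2). *)
Fixpoint wins (m k : nat) (fs1 : seq factor) (p1 : nat) (fs2 : seq factor) (p2 : nat) : Prop :=
  match k with
  | 0 => True
  | k'.+1 =>
    (forall p1', p1' < size (word_of fs1) -> p1' != p1 ->
       exists p2', [/\ basic_ok (word_of fs1) p1 p1' (word_of fs2) p2 p2',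
                       equiv0 m fs1 p1' fs2 p2' & wins m k' fs1 p1' fs2 p2'])
    /\
    (forall p2', p2' < size (word_of fs2) -> p2' != p2 ->
       exists p1', [/\ basic_ok (word_of fs2) p2 p2' (word_of fs1) p1 p1',
                       equiv0 m fs1 p1' fs2 p2' & wins m k' fs1 p1' fs2 p2'])
  end.

(* unmarked words: w1 ≡^m_k w2 (for k >= 1) *)
Definition equivk (m k : nat) (fs1 fs2 : seq factor) : Prop :=
  (forall p1, p1 < size (word_of fs1) ->
     exists p2, [/\ p2 < size (word_of fs2), equiv0 m fs1 p1 fs2 p2 &
                    wins m k.-1 fs1 p1 fs2 p2])
  /\
  (forall p2, p2 < size (word_of fs2) ->
     exists p1, [/\ p1 < size (word_of fs1), equiv0 m fs1 p1 fs2 p2 &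
                    wins m k.-1 fs1 p1 fs2 p2]).

Definition Xf (S T : nat) : seq factor :=
  flatten (nseq T [:: Fv S; Fa; Fv S; Fb; Fv S]).

End Words.

(* Main.v *)
Require Import Defs.
From mathcomp Require Import all_boot zify.
Set Implicit Arguments. Unset Strict Implicit. Unset Printing Implicit Defensive.

Definition Aw (w : word) (L : nat -> option (nkind*nat)) (x : nat) :
  option (letter * option (nkind*nat)) :=
  if x < size w then Some (nth (la 0) w x, L x) else None.

Definition VE {T} (A B : nat -> T) (rho p q : nat) : Prop :=
  forall x y, x + q = y + p -> p <= x + rho -> x <= p + rho -> A x = B y.

Lemma VE_sym T (A B : nat -> T) rho p q : VE A B rho p q -> VE B A rho q p.
Proof. move=> H x y E H1 H2; symmetry; apply: H; lia. Qed.

Lemma VE_trans T (A B C : nat -> T) rho p q r : rho <= q ->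
  VE A B rho p q -> VE B C rho q r -> VE A C rho p r.
Proof.
move=> Hq H1 H2 x z E Ha Hb.
have -> : A x = B (x + q - p) by apply: H1; lia.
apply: H2; lia.
Qed.

Lemma VE_mon T (A B : nat -> T) rho rho' p q : rho' <= rho -> VE A B rho p q -> VE A B rho' p q.
Proof. move=> H H1 x y E Ha Hb; apply: H1; lia. Qed.

Fixpoint gw (w1 w2 : word) (L1 L2 : nat -> option (nkind*nat)) (k p q : nat) : Prop :=
  match k with 0 => True | k'.+1 =>
   (forall p', p' < size w1 -> p' != p -> exists q', [/\ basic_ok w1 p p' w2 q q',
        onth w1 p' = onth w2 q' /\ L1 p' = L2 q' & gw w1 w2 L1 L2 k' p' q'])
   /\ (forall q', q' < size w2 -> q' != q -> exists p', [/\ basic_ok w2 q q' w1 p p',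
        onth w1 p' = onth w2 q' /\ L1 p' = L2 q' & gw w1 w2 L1 L2 k' p' q'])
  end.

Lemma wins_gw r s m k fs1 p1 fs2 p2 :
  gw (word_of r s fs1) (word_of r s fs2) (locate r s m fs1) (locate r s m fs2) k p1 p2 ->
  wins r s m k fs1 p1 fs2 p2.
Proof.
elim: k p1 p2 => //= k IH p1 p2 [H1 H2]; split.
- move=> p' Hp Hne; have [q' [Hb He Hg]] := H1 p' Hp Hne.
  by exists q'; split => //; apply: IH.
- move=> p' Hp Hne; have [q' [Hb He Hg]] := H2 p' Hp Hne.
  by exists q'; split => //; apply: IH.
Qed.

Lemma onthS (w : word) x : x < size w -> onth w x = Some (nth (la 0) w x).
Proof. by move=> H; rewrite onthE (nth_map (la 0)). Qed.

Lemma Aw_eq w1 w2 L1 L2 x y : Aw w1 L1 x = Aw w2 L2 y -> x < size w1 ->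
  [/\ y < size w2, nth (la 0) w1 x = nth (la 0) w2 y & L1 x = L2 y].
Proof.
rewrite /Aw => E Hx; rewrite Hx in E.
case: ifP E => // Hy [E1 E2]; by split.
Qed.

Lemma Aw_onth w1 w2 L1 L2 x y : Aw w1 L1 x = Aw w2 L2 y -> x < size w1 ->
  onth w1 x = onth w2 y /\ L1 x = L2 y.
Proof.
move=> E Hx; have [Hy E1 E2] := Aw_eq E Hx.
by rewrite !onthS // E1.
Qed.

Lemma jumpedC w x y : jumped w x y = jumped w y x.
Proof. by rewrite /jumped minnC maxnC. Qed.

Lemma jumped_mk w x y : x < y -> y <= size w ->
  jumped w x y = mkseq (fun t => nth (la 0) w (x.+1 + t)) (y - x.+1).
Proof.
move=> Hxy Hy; rewrite /jumped (minn_idPl (ltnW Hxy)) (maxn_idPr (ltnW Hxy)).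
apply: (@eq_from_nth _ (la 0)).
  by rewrite size_mkseq size_drop size_takel.
move=> i; rewrite size_drop size_takel // => Hi.
rewrite nth_mkseq // nth_drop nth_take //; lia.
Qed.

Section Generic.
Variables (d K P P0 k : nat) (Sig : seq letter).
Definition rho j := j * d.
Definition D j := j.+1 * K.

Definition fullj (w : word) :=
  forall x y, x + d <= y -> y < size w -> jumped w x y =i Sig.
Definition Occ j (A B : nat -> option (letter * option (nkind*nat))) (nA nB : nat) :=
  forall p', D j <= p' -> p' + D j <= nA -> forall x, D j <= x -> x + P + D j <= nB ->
   exists q', x <= q' < x + P /\ VE A B (rho j) p' q'.

Definition Hyps w1 w2 L1 L2 :=
  [/\ 0 < d, d + P <= K, 2 * D k + P <= size w1, 2 * D k + P <= size w2 &
   D k + rho k <= P0] /\ [/\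
   (forall x, x < P0 -> Aw w1 L1 x = Aw w2 L2 x),
   (forall x y, x + size w2 = y + size w1 -> size w1 <= x + P0 -> Aw w1 L1 x = Aw w2 L2 y),
   fullj w1 /\ fullj w2 &
   (forall j, j <= k -> Occ j (Aw w1 L1) (Aw w2 L2) (size w1) (size w2) /\
                         Occ j (Aw w2 L2) (Aw w1 L1) (size w2) (size w1))].

Lemma Hyps_sym w1 w2 L1 L2 : Hyps w1 w2 L1 L2 -> Hyps w2 w1 L2 L1.
Proof.
case=> [[H1 H2 H3 H4 H5] [H6 H7 [H8 H9] H10]]; split => //; split => //.
- by move=> x Hx; rewrite H6.
- move=> x y E Hx; symmetry; apply: H7; lia.
- by move=> j Hj; have [] := H10 j Hj.
Qed.

Definition Inv w1 w2 L1 L2 j p q :=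
  [/\ p < size w1, q < size w2, VE (Aw w1 L1) (Aw w2 L2) (rho j) p q,
      (p < D j \/ q < D j -> p = q) &
      (size w1 - p < D j \/ size w2 - q < D j -> size w1 - p = size w2 - q)].

Lemma Inv_sym w1 w2 L1 L2 j p q : Inv w1 w2 L1 L2 j p q -> Inv w2 w1 L2 L1 j q p.
Proof.
case=> H1 H2 H3 H4 H5; split => //; first exact: VE_sym.
- by move=> H; symmetry; apply: H4; case: H; auto.
- by move=> H; symmetry; apply: H5; case: H; auto.
Qed.

Lemma DS j : D j.+1 = D j + K. Proof. by rewrite /D mulSn addnC. Qed.
Lemma RS j : rho j.+1 = rho j + d. Proof. by rewrite /rho mulSn addnC. Qed.
Lemma Dmon i j : i <= j -> D i <= D j. Proof. by move=> H; rewrite /D leq_mul. Qed.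
Lemma Rmon i j : i <= j -> rho i <= rho j. Proof. by move=> H; rewrite /rho leq_mul. Qed.

Lemma Aw_some w L x : x < size w -> exists a, Aw w L x = Some a.
Proof. by rewrite /Aw => ->; eexists. Qed.
Lemma Aw_none w L x : size w <= x -> Aw w L x = None.
Proof. by rewrite /Aw leqNgt => /negbTE ->. Qed.

Lemma Aw_lt w1 w2 L1 L2 x y : Aw w1 L1 x = Aw w2 L2 y -> x < size w1 -> y < size w2.
Proof. by move=> E Hx; case: (Aw_eq E Hx). Qed.

Lemma VE_shr T (A B : nat -> T) r e e' p q : e <= e' -> VE A B (r + e') p q -> VE A B r (p + e) (q + e).
Proof. move=> He H x y E H1 H2; apply: H; lia. Qed.
Lemma VE_shl T (A B : nat -> T) r e e' p q : e <= e' -> e <= p -> e <= q -> VE A B (r + e') p q -> VE A B r (p - e) (q - e).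
Proof. move=> He Hp Hq H x y E H1 H2; apply: H; lia. Qed.

Lemma step w1 w2 L1 L2 j p q : Hyps w1 w2 L1 L2 -> j < k -> Inv w1 w2 L1 L2 j.+1 p q ->
  forall p', p' < size w1 -> p' != p -> exists q',
   [/\ basic_ok w1 p p' w2 q q', Aw w1 L1 p' = Aw w2 L2 q' & Inv w1 w2 L1 L2 j p' q'].
Proof.
case=> [[Hd HK Hs1 Hs2 HP0] [Hpre Hsuf [Hf1 Hf2] Hocc]] Hj.
case=> Hp Hq HV Hl Hr p' Hp' Hne.
have DSj := DS j; have RSj := RS j.
have Dj1k : D j.+1 <= D k by apply: Dmon.
have Rjk : rho j <= rho k by apply: Rmon; lia.
have Djk : D j <= D k by apply: Dmon; lia.
set n1 := size w1 in Hs1 Hp Hp' Hr Hsuf Hf1 Hocc *.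
set n2 := size w2 in Hs2 Hq Hr Hsuf Hf2 Hocc *.
set A1 := Aw w1 L1 in HV Hpre Hsuf Hocc *.
set A2 := Aw w2 L2 in HV Hpre Hsuf Hocc *.
have fullE : forall (w w' : word) a b c e, (forall x y, x + d <= y -> y < size w -> jumped w x y =i Sig) ->
   (forall x y, x + d <= y -> y < size w' -> jumped w' x y =i Sig) ->
   a < size w -> b < size w -> c < size w' -> e < size w' ->
   (a + d <= b \/ b + d <= a) -> (c + d <= e \/ e + d <= c) -> jumped w a b =i jumped w' c e.
  move=> w w' a b c e F1 F2 Ha Hb Hc He H1 H2 z.
  have -> : (z \in jumped w a b) = (z \in Sig).
    by case: H1 => H1; [rewrite F1 | rewrite jumpedC F1].
  by case: H2 => H2; [rewrite F2 | rewrite jumpedC F2].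
have [Ho _] := Hocc j (ltnW Hj).
have fin : forall q', VE A1 A2 (rho j) p' q' -> (p' < p) = (q' < q) -> (p < p') = (q < q') ->
   (p' + d <= p \/ p + d <= p') -> (q' + d <= q \/ q + d <= q') ->
   (p' < D j \/ q' < D j -> p' = q') -> (n1 - p' < D j \/ n2 - q' < D j -> n1 - p' = n2 - q') ->
   exists q', [/\ basic_ok w1 p p' w2 q q', A1 p' = A2 q' & Inv w1 w2 L1 L2 j p' q'].
  move=> q' HV' H1 H2 H3 H4 H5 H6.
  have E1 : A1 p' = A2 q' by apply: HV'; lia.
  have Hq' := Aw_lt E1 Hp'.
  exists q'; split => //; split => //.
  - by case: (Aw_onth E1 Hp').
  - apply: fullE => //; lia.
have finL : p' + d < D j.+1 -> p' + d <= p \/ p + d <= p' ->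
   exists q', [/\ basic_ok w1 p p' w2 q q', A1 p' = A2 q' & Inv w1 w2 L1 L2 j p' q'].
  move=> Hz Hlg.
  have H : p = q \/ (D j.+1 <= p /\ D j.+1 <= q).
    case: (ltnP p (D j.+1)) => H1; first by left; apply: Hl; left.
    case: (ltnP q (D j.+1)) => H2; first by left; apply: Hl; right.
    by right.
  apply: (fin p'); try (apply/idP/idP; lia); try lia.
  move=> x y E H1 H2; have -> : y = x by lia.
  apply: Hpre; lia.
have finR : n1 + d < p' + D j.+1 -> p' + d <= p \/ p + d <= p' ->
   exists q', [/\ basic_ok w1 p p' w2 q q', A1 p' = A2 q' & Inv w1 w2 L1 L2 j p' q'].
  move=> Hz Hlg.
  have H : n1 - p = n2 - q \/ (D j.+1 <= n1 - p /\ D j.+1 <= n2 - q).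
    case: (ltnP (n1 - p) (D j.+1)) => H1; first by left; apply: Hr; left.
    case: (ltnP (n2 - q) (D j.+1)) => H2; first by left; apply: Hr; right.
    by right.
  apply: (fin (n2 - (n1 - p'))); try (apply/idP/idP; lia); try lia.
  move=> x y E H1 H2; apply: Hsuf; lia.
case: (ltnP p p') => Hpp.
-
  case: (ltnP p' (p + d)) => Hsm.
  +
    have [e He] : exists e, e = p' - p by eexists.
    have E1 : A1 p' = A2 (q + e) by apply: HV; lia.
    have Hq' := Aw_lt E1 Hp'.
    exists (q + e); split => //.
    * split => //; try (apply/idP/idP; lia); try lia.
      - by case: (Aw_onth E1 Hp').
      - rewrite jumped_mk; [|lia|lia].
        rewrite jumped_mk; [|lia|lia].
        have -> : q + e - q.+1 = p' - p.+1 by lia.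
        move=> z; congr (z \in _); rewrite /mkseq; apply/eq_in_map => t; rewrite mem_iota => /andP[_ Ht].
        have E2 : A1 (p.+1 + t) = A2 (q.+1 + t) by apply: HV; lia.
        by case: (Aw_eq E2 _) => //; lia.
    * split => //; first (have -> : p' = p + e by lia); last (by move=> H; have := Hr; lia); last (by move=> H; have := Hl; lia).
      apply: (VE_shr (e' := d)); [lia | by rewrite -RSj].
  +
    case: (ltnP (p' + d) (D j.+1)) => Hz1.
      by apply: finL; lia.
    case: (ltnP (p' + D j.+1) (n1 + d).+1) => Hz2; last first.
      apply: finR; lia.
    have Hq2 : q + D j.+1 <= n2.
      case: (ltnP (n2 - q) (D j.+1)) => H; last by lia.
      have := Hr (or_intror H); lia.
    have [q' [Hq'1 HVq]] := Ho p' ltac:(lia) ltac:(lia) (maxn (q + d) (D j)) ltac:(lia) ltac:(lia).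
    apply: (fin q') => //; try (apply/idP/idP; lia); lia.
-
  have Hpp' : p' < p by rewrite ltn_neqAle Hpp andbT.
  case: (ltnP p (p' + d)) => Hsm.
  +
    have [e He] : exists e, e = p - p' by eexists.
    have Heq : e <= q by have := Hl; lia.
    have E1 : A1 p' = A2 (q - e) by apply: HV; lia.
    have Hq' := Aw_lt E1 Hp'.
    exists (q - e); split => //.
    * split => //; try (apply/idP/idP; lia); try lia.
      - by case: (Aw_onth E1 Hp').
      - rewrite jumpedC jumped_mk; [|lia|lia].
        rewrite jumpedC jumped_mk; [|lia|lia].
        have -> : q - (q - e).+1 = p - p'.+1 by lia.
        move=> z; congr (z \in _); rewrite /mkseq; apply/eq_in_map => t; rewrite mem_iota => /andP[_ Ht].
        have E2 : A1 (p'.+1 + t) = A2 ((q - e).+1 + t) by apply: HV; lia.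
        by case: (Aw_eq E2 _) => //; lia.
    * split => //; first (have -> : p' = p - e by lia); last (by move=> H; have := Hr; lia); last (by move=> H; have := Hl; lia).
      apply: (VE_shl (e' := d)); [lia | lia | lia | by rewrite -RSj].
  +
    case: (ltnP (p' + d) (D j.+1)) => Hz1.
      by apply: finL; lia.
    case: (ltnP (p' + D j.+1) (n1 + d).+1) => Hz2; last first.
      apply: finR; lia.
    have Hq2 : D j.+1 <= q.
      case: (ltnP q (D j.+1)) => H; last by lia.
      have := Hl (or_intror H); lia.
    have [q' [Hq'1 HVq]] := Ho p' ltac:(lia) ltac:(lia) (minn (q - d - P) (n2 - D j - P)) ltac:(lia) ltac:(lia).
    apply: (fin q') => //; try (apply/idP/idP; lia); lia.
Qed.

Lemma gw_Inv w1 w2 L1 L2 : Hyps w1 w2 L1 L2 -> forall j, j <= k -> forall p q,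
  Inv w1 w2 L1 L2 j p q -> gw w1 w2 L1 L2 j p q.
Proof.
move=> HH; elim=> [//|j IH] Hj p q HI /=; split.
- move=> p' Hp' Hne; have [q' [Hb E HI']] := step HH Hj HI Hp' Hne.
  exists q'; split => //; [exact: Aw_onth E Hp' | exact: IH (ltnW Hj) _ _ HI'].
- move=> q' Hq' Hne; have [p' [Hb E HI']] := step (Hyps_sym HH) Hj (Inv_sym HI) Hq' Hne.
  exists p'; split => //; last exact: IH (ltnW Hj) _ _ (Inv_sym HI').
  have Hp' := Aw_lt E Hq'.
  by have [H1 H2] := Aw_onth (esym E) Hp'.
Qed.

Lemma place w1 w2 L1 L2 : Hyps w1 w2 L1 L2 -> forall p, p < size w1 ->
  exists q, Aw w1 L1 p = Aw w2 L2 q /\ Inv w1 w2 L1 L2 k p q.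
Proof.
case=> [[Hd HK Hs1 Hs2 HP0] [Hpre Hsuf _ Hocc]] p Hp.
have [Ho _] := Hocc k (leqnn k).
have fin : forall q, VE (Aw w1 L1) (Aw w2 L2) (rho k) p q -> (p < D k \/ q < D k -> p = q) ->
    (size w1 - p < D k \/ size w2 - q < D k -> size w1 - p = size w2 - q) ->
    exists q, Aw w1 L1 p = Aw w2 L2 q /\ Inv w1 w2 L1 L2 k p q.
  move=> q HV H1 H2; have E : Aw w1 L1 p = Aw w2 L2 q by apply: HV; lia.
  exists q; split => //; split => //; exact: Aw_lt E Hp.
case: (ltnP p (D k)) => H1.
  apply: (fin p); try lia.
  move=> x y E Ha Hb; have -> : y = x by lia.
  apply: Hpre; lia.
case: (ltnP (size w1) (p + D k)) => H2.
  apply: (fin (size w2 - (size w1 - p))); try lia.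
  move=> x y E Ha Hb; apply: Hsuf; lia.
have [q [Hq HV]] := Ho p H1 ltac:(lia) (D k) (leqnn _) ltac:(lia).
apply: (fin q) => //; lia.
Qed.

Lemma generic_equiv r s m fs1 fs2 :
  Hyps (word_of r s fs1) (word_of r s fs2) (locate r s m fs1) (locate r s m fs2) ->
  equivk r s m k.+1 fs1 fs2.
Proof.
move=> HH; split.
- move=> p1 Hp1; have [q [E HI]] := place HH Hp1.
  exists q; split; [exact: Aw_lt E Hp1 | exact: Aw_onth E Hp1 |].
  by apply: wins_gw; apply: gw_Inv HI.
- move=> p2 Hp2; have [q [E HI]] := place (Hyps_sym HH) Hp2.
  have Hq := Aw_lt E Hp2.
  exists q; split => //; first by have := Aw_onth (esym E) Hq.
  by apply: wins_gw; apply: gw_Inv (Inv_sym HI).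
Qed.
End Generic.

Section Conc.
Variables r s m : nat.
Local Notation V := (size (vw r s)).
Local Notation W := (word_of r s).
Local Notation aux := (nbhds_aux r s m).
Local Notation loc := (locate r s m).

Definition fm (l : seq (nkind * nat * nat)) (p : nat) : option (nkind * nat) :=
  match [seq x <- l | (x.1.2 <= p) && (p < x.1.2 + x.2)] with
  | x :: _ => Some (x.1.1, p - x.1.2)
  | [::] => None
  end.

Lemma locE fs p : loc fs p = fm (nbhds r s m fs) p. Proof. by []. Qed.

Lemma fm_catl l1 l2 p : (forall e, e \in l1 -> ~~ ((e.1.2 <= p) && (p < e.1.2 + e.2))) ->
  fm (l1 ++ l2) p = fm l2 p.
Proof.
move=> H; rewrite /fm filter_cat.
have -> : [seq x <- l1 | (x.1.2 <= p) && (p < x.1.2 + x.2)] = [::] by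
  apply/eqP; rewrite -(negbK (_ == _)) -has_filter; apply/hasPn.
by [].
Qed.

Lemma fm_catr l1 l2 p : (forall e, e \in l2 -> ~~ ((e.1.2 <= p) && (p < e.1.2 + e.2))) ->
  fm (l1 ++ l2) p = fm l1 p.
Proof.
move=> H; rewrite /fm filter_cat.
have -> : [seq x <- l2 | (x.1.2 <= p) && (p < x.1.2 + x.2)] = [::] by
  apply/eqP; rewrite -(negbK (_ == _)) -has_filter; apply/hasPn.
by rewrite cats0.
Qed.

Definition sh c (e : nkind * nat * nat) := (e.1.1, e.1.2 + c, e.2).

Lemma fm_shift l c p : fm (map (sh c) l) (p + c) = fm l p.
Proof.
rewrite /fm filter_map /=.
have -> : [seq x <- l | preim (sh c) (fun x => (x.1.2 <= p + c) && (p + c < x.1.2 + x.2)) x]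
        = [seq x <- l | (x.1.2 <= p) && (p < x.1.2 + x.2)].
  apply: eq_filter => e /=; rewrite leq_add2r; congr (_ && _); lia.
case: [seq x <- l | _] => //= e _; congr (Some (_, _)); lia.
Qed.

Lemma word_of_cat a b : W (a ++ b) = W a ++ W b.
Proof. by rewrite /word_of map_cat flatten_cat. Qed.

Lemma size_vpow n : size (vpow r s n) = n * V.
Proof. by elim: n => //= n IH; rewrite /vpow /= size_cat -/(vpow r s n) IH mulSn. Qed.

Lemma aux_cat pos f1 f2 : aux pos (f1 ++ f2) = aux pos f1 ++ aux (pos + size (W f1)) f2.
Proof.
elim: f1 pos => [|f f1 IH] pos /=; first by rewrite addn0.
rewrite IH /=.
have E : size (W (f :: f1)) = size (fword r s f) + size (W f1) by rewrite /= size_cat.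
by case: f E => [||n] /= ->; rewrite addnA.
Qed.

Lemma aux_bound pos fs e : e \in aux pos fs ->
  pos - m * V <= e.1.2 /\ e.1.2 + e.2 <= pos + size (W fs) + 2 * (m * V).
Proof.
case: e => [[k0 st] ln] /=.
elim: fs pos => [|f fs IH] pos //=.
have Hs : size (W (f :: fs)) = size (fword r s f) + size (W fs) by rewrite /= size_cat.
rewrite Hs; case: f {Hs} => [||n] /=.
- rewrite inE => /orP [/eqP [_ -> ->]|/IH]; first by split; lia.
  move=> [H1 H2]; split; lia.
- rewrite inE => /orP [/eqP [_ -> ->]|/IH]; first by split; lia.
  move=> [H1 H2]; split; lia.
- move=> /IH [H1 H2]; split; lia.
Qed.

Lemma aux_shift pos c fs : m * V <= pos -> aux (pos + c) fs = map (sh c) (aux pos fs).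
Proof.
elim: fs pos => [|f fs IH] pos Hp //=.
case: f => [||n] /=.
- rewrite (addnAC pos c) IH; last by lia.
  rewrite /sh /=; congr ((_, _, _) :: _); lia.
- rewrite (addnAC pos c) IH; last by lia.
  rewrite /sh /=; congr ((_, _, _) :: _); lia.
- rewrite (addnAC pos c) IH //; lia.
Qed.

Lemma locPre fs x : x < m * V -> loc fs x = Some (NPre, x).
Proof. by move=> H; rewrite /locate /nbhds /= H subn0. Qed.

Lemma locSuf fs x : m * V <= x -> size (W fs) - m * V <= x -> x < size (W fs) ->
  loc fs x = Some (NSuf, x - (size (W fs) - m * V)).
Proof.
move=> H1 H2 H3; rewrite /locate /nbhds /= add0n ltnNge H1 /= H2 /=.
by have -> : x < size (W fs) - m * V + m * V by lia.
Qed.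

Lemma locate_mid L M R x :
  m * V <= x -> x + m * V < size (W (L ++ M ++ R)) -> x + m * V < size (W L) + size (W M) ->
  (forall e, e \in aux 0 L -> e.1.2 + e.2 <= x) ->
  loc (L ++ M ++ R) x = fm (aux (size (W L)) M) x.
Proof.
move=> H1 H2 H3 HL; rewrite locE /nbhds.
rewrite -cat1s fm_catl; last by move=> e; rewrite inE => /eqP -> /=; rewrite -leqNgt.
rewrite -cat1s fm_catl; last by move=> e; rewrite inE => /eqP -> /=; apply/negP; lia.
rewrite aux_cat aux_cat add0n fm_catl; last by move=> e /HL /= H; apply/negP; lia.
rewrite fm_catr // => [[[k0 st] ln]] /aux_bound /= [Ha Hb]; apply/negP; lia.
Qed.

Lemma fm_mid pL n M0 o : m <= n ->
  fm (aux pL (Fv n :: M0)) (pL + o) = fm (aux (n * V) M0) o.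
Proof.
move=> Hn /=; rewrite size_vpow addnC aux_shift; last by rewrite leq_mul2r Hn orbT.
by rewrite addnC fm_shift.
Qed.

Lemma nth_mid L M R o : o < size (W M) ->
  nth (la 0) (W (L ++ M ++ R)) (size (W L) + o) = nth (la 0) (W M) o.
Proof.
move=> Ho; rewrite !word_of_cat nth_cat ltnNge leq_addr /= addKn nth_cat Ho.
by [].
Qed.

Lemma Amid L M R L' R' n M0 o :
  M = Fv n :: M0 -> m <= n ->
  m * V <= size (W L) + o -> m * V <= size (W L') + o ->
  size (W L) + o + m * V < size (W (L ++ M ++ R)) ->
  size (W L') + o + m * V < size (W (L' ++ M ++ R')) ->
  o + m * V < size (W M) ->
  (forall e, e \in aux 0 L -> e.1.2 + e.2 <= size (W L) + o) ->
  (forall e, e \in aux 0 L' -> e.1.2 + e.2 <= size (W L') + o) ->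
  Aw (W (L ++ M ++ R)) (loc (L ++ M ++ R)) (size (W L) + o) =
  Aw (W (L' ++ M ++ R')) (loc (L' ++ M ++ R')) (size (W L') + o).
Proof.
move=> HM Hn H1 H1' H2 H2' H3 HL HL'.
rewrite /Aw.
have -> : size (W L) + o < size (W (L ++ M ++ R)) by lia.
have -> : size (W L') + o < size (W (L' ++ M ++ R')) by lia.
rewrite !nth_mid; try lia.
rewrite !locate_mid //; try lia.
by rewrite HM !fm_mid.
Qed.
End Conc.

Section Conc2.
Variables r s m S T : nat.
Hypotheses (Hr : 0 < r) (Hs : 0 < s) (HS : 3 * m + 1 <= S) (HT : 2 <= T).
Local Notation V := (size (vw r s)).
Local Notation W := (word_of r s).
Local Notation aux := (nbhds_aux r s m).
Local Notation loc := (locate r s m).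

Definition Ub := [:: Fv S; Fa; Fv S; Fb; Fv S].
Local Notation N := (size (W Ub)).

Lemma size_aw : size (aw r) = r. Proof. by rewrite size_map size_iota. Qed.
Lemma size_bw : size (bw s) = s. Proof. by rewrite size_map size_iota. Qed.

Lemma W_cons f fs : W (f :: fs) = fword r s f ++ W fs. Proof. by []. Qed.
Lemma W_nil : W [::] = [::]. Proof. by []. Qed.
Lemma fwA : fword r s Fa = aw r. Proof. by []. Qed.
Lemma fwB : fword r s Fb = bw s. Proof. by []. Qed.
Lemma fwV n : fword r s (Fv n) = vpow r s n. Proof. by []. Qed.

Lemma sW_cons f fs : size (W (f :: fs)) = size (fword r s f) + size (W fs).
Proof. by rewrite W_cons size_cat. Qed.
Lemma sW_cat a b : size (W (a ++ b)) = size (W a) + size (W b).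
Proof. by rewrite word_of_cat size_cat. Qed.
Lemma sW_nil : size (W [::]) = 0. Proof. by []. Qed.
Lemma sizeN : N = 3 * (S * V) + r + s.
Proof. rewrite /Ub !sW_cons !fwA !fwB !fwV !size_vpow size_aw size_bw /=; lia. Qed.


Lemma Xf_add a b : Xf S (a + b) = Xf S a ++ Xf S b.
Proof. by rewrite /Xf nseqD flatten_cat. Qed.
Lemma XfS n : Xf S n.+1 = Ub ++ Xf S n. Proof. by []. Qed.
Lemma size_Xf n : size (W (Xf S n)) = n * N.
Proof. by elim: n => // n IH; rewrite XfS word_of_cat size_cat IH mulSn. Qed.

Definition fs1 := Xf S T ++ Xf S T.
Definition fs2 := Xf S T ++ Fa :: Xf S T.
Definition A1 := Aw (W fs1) (loc fs1).
Definition A2 := Aw (W fs2) (loc fs2).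

Lemma size1 : size (W fs1) = 2 * (T * N).
Proof. by rewrite /fs1 word_of_cat size_cat size_Xf; lia. Qed.
Lemma size2 : size (W fs2) = 2 * (T * N) + r.
Proof. by rewrite /fs2 word_of_cat size_cat W_cons fwA size_cat size_aw size_Xf; lia. Qed.

Lemma Vpos : 0 < V.
Proof. case: r Hr => // r' _; by rewrite /vw /=. Qed.

Lemma mVN : 3 * (m * V) + V <= S * V.
Proof. have := Vpos; nia. Qed.

Lemma XfT : exists M0, Xf S T = Fv S :: M0.
Proof. case: T HT => // t _; rewrite XfS; by eexists. Qed.

Lemma C1 x : x + m * V < T * N -> A1 x = A2 x.
Proof.
move=> Hx.
have HXn := size_Xf T.
case: (ltnP x (m * V)) => Hm.
- rewrite /A1 /A2 /Aw size1 size2.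
  have -> : x < 2 * (T * N) by lia.
  have -> : x < 2 * (T * N) + r by lia.
  rewrite !locPre // /fs1 /fs2 !word_of_cat !nth_cat HXn.
  by have -> : x < T * N by lia.
- have [M0 HM] := XfT.
  have := @Amid r s m [::] (Xf S T) (Xf S T) [::] (Fa :: Xf S T) S M0 x HM ltac:(lia).
  apply; rewrite ?sW_nil ?cat0s ?sW_cat ?sW_cons ?fwA ?size_aw ?HXn //; lia.
Qed.

Lemma Npos : 2 * (m * V) + V <= N.
Proof. have := mVN; rewrite sizeN; lia. Qed.

Lemma nth1 x : T * N <= x -> nth (la 0) (W fs1) x = nth (la 0) (W (Xf S T)) (x - T * N).
Proof. by move=> H; rewrite /fs1 word_of_cat nth_cat size_Xf ltnNge H. Qed.

Lemma nth2 x : T * N + r <= x -> nth (la 0) (W fs2) x = nth (la 0) (W (Xf S T)) (x - T * N - r).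
Proof.
move=> H; rewrite /fs2 word_of_cat nth_cat size_Xf ltnNge (leq_trans (leq_addr r _) H) /=.
rewrite W_cons fwA nth_cat size_aw ltnNge.
by have -> : r <= x - T * N by lia.
Qed.

Lemma bound0 L e : e \in aux 0 L -> e.1.2 + e.2 <= size (W L) + 2 * (m * V).
Proof. by case: e => [[k0 st] ln] /aux_bound /= [_ Hb]; lia. Qed.

Lemma C2 x : T * N + 2 * (m * V) <= x -> A1 x = A2 (x + r).
Proof.
move=> Hx. have HXn := size_Xf T. have HN := Npos.
have s1 := size1; have s2 := size2.
case: (ltnP x (2 * (T * N))) => H1; last first.
  by rewrite /A1 /A2 !Aw_none // ?size1 ?size2; lia.
case: (ltnP x (2 * (T * N) - m * V)) => H2.
- have [M0 HM] := XfT.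
  have E : fs2 = (Xf S T ++ [:: Fa]) ++ Xf S T ++ [::] by rewrite cats0 -catA.
  have E1 : fs1 = Xf S T ++ Xf S T ++ [::] by rewrite cats0.
  have sL' : size (W (Xf S T ++ [:: Fa])) = T * N + r by rewrite sW_cat sW_cons fwA size_aw sW_nil; lia.
  have := @Amid r s m (Xf S T) (Xf S T) [::] (Xf S T ++ [:: Fa]) [::] S M0 (x - T * N) HM ltac:(lia).
  rewrite -E -E1 /A1 /A2 sL' HXn.
  have -> : T * N + (x - T * N) = x by lia.
  have -> : T * N + r + (x - T * N) = x + r by lia.
  apply; rewrite ?size1 ?size2 ?HXn; try lia.
  + by move=> e /bound0; rewrite HXn; lia.
  + by move=> e /bound0; rewrite sL'; lia.
- rewrite /A1 /A2 /Aw size1 size2 H1.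
  have -> : x + r < 2 * (T * N) + r by lia.
  rewrite !locSuf ?size1 ?size2; try lia.
  rewrite nth1; last by lia.
  rewrite nth2; last by lia.
  have -> : x + r - T * N - r = x - T * N by lia.
  by have -> : x + r - (2 * (T * N) + r - m * V) = x - (2 * (T * N) - m * V) by lia.
Qed.

Lemma Xf1 : Xf S 1 = Ub. Proof. by []. Qed.
Lemma fs1E : fs1 = Xf S (T + T). Proof. by rewrite /fs1 Xf_add. Qed.

Lemma C3 x : N <= x -> x + 4 * N <= 2 * (T * N) -> A1 x = A1 (x + N).
Proof.
move=> H1 H2. have HN := Npos.
have N0 : 0 < N by have := Vpos; lia.
have Hd := divn_eq x N; have Ho := ltn_pmod x N0.
move: Hd Ho; set i := x %/ N; set o := x %% N => Hd Ho.
case: i Hd => [|i] Hd; first by rewrite mul0n add0n in Hd; lia.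
have Hi : i.+1 + 4 <= 2 * T.
  rewrite -(leq_pmul2r N0); lia.
have E1 : fs1 = Xf S i ++ Xf S 3 ++ Xf S (T + T - i - 3).
  by rewrite fs1E -!Xf_add; congr Xf; lia.
have E2 : fs1 = Xf S i.+1 ++ Xf S 3 ++ Xf S (T + T - i - 4).
  by rewrite fs1E -!Xf_add; congr Xf; lia.
have s1 := size1.
have := @Amid r s m (Xf S i) (Xf S 3) (Xf S (T + T - i - 3)) (Xf S i.+1) (Xf S (T + T - i - 4))
   S (Fa :: Fv S :: Fb :: Fv S :: Xf S 2) (N + o) erefl ltac:(lia).
rewrite -E1 -E2 /A1 !size_Xf.
have -> : i * N + (N + o) = x by rewrite Hd mulSn; lia.
have -> : i.+1 * N + (N + o) = x + N by rewrite Hd mulSn; lia.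
apply; rewrite ?size1 ?size_Xf; try (rewrite mulSn; lia); try lia.
- by move=> e /bound0; rewrite size_Xf; lia.
- by move=> e /bound0; rewrite size_Xf; lia.
Qed.

Lemma C4 y : 2 * (m * V) <= y -> y + m * V < 2 * (S * V) + r ->
  A2 (T * N - S * V + y) = A1 (N + y).
Proof.
move=> H1 H2. have HN := Npos. have HNe := sizeN.
have HT1 : T = T.-1.+1 by lia.
have XT : Xf S T = Xf S T.-1 ++ Ub by rewrite -Xf1 -Xf_add addn1 -HT1.
have XT' : Xf S T = Ub ++ Xf S T.-1 by rewrite HT1.
set L' := Xf S T.-1 ++ [:: Fv S; Fa; Fv S; Fb].
set M := [:: Fv S; Fa; Fv S].
set R' := [:: Fa; Fv S; Fb; Fv S] ++ Xf S T.-1.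
have E2 : fs2 = L' ++ M ++ R' by rewrite /fs2 {1}XT XT' /L' /M /R' /Ub -!catA.
have E1 : fs1 = Ub ++ M ++ ([:: Fb; Fv S] ++ Xf S (T + T - 2)).
  have E : T + T = (T + T - 2).+2 by lia.
  by rewrite fs1E {1}E !XfS /M /Ub.
have sL' : size (W L') = T * N - S * V.
  rewrite /L' sW_cat size_Xf {2}HT1 mulSn HNe !sW_cons sW_nil !fwA !fwB !fwV !size_vpow size_aw size_bw; move: (T.-1) => t; lia.
have := @Amid r s m Ub M ([:: Fb; Fv S] ++ Xf S (T + T - 2)) L' R' S [:: Fa; Fv S] y erefl ltac:(lia).
rewrite -E1 -E2 /A1 /A2 sL' => H; symmetry; apply: H; rewrite ?size1 ?size2 ?sL'; try lia.
- rewrite /M !sW_cons sW_nil !fwA !fwV !size_vpow size_aw; lia.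
- by move=> e /bound0; lia.
- by move=> e /bound0; rewrite sL'; lia.
Qed.
End Conc2.

Section Full.
Variables r s : nat.
Hypotheses (Hr : 0 < r) (Hs : 0 < s).
Local Notation V := (size (vw r s)).
Local Notation W := (word_of r s).

Definition good (w : word) := forall x t, x + 3 * V <= size w -> t < V ->
  exists2 y, x <= y < x + 3 * V & nth (la 0) w y = nth (la 0) (vw r s) t.
Definition starts (w : word) := V <= size w /\ forall t, t < V -> nth (la 0) w t = nth (la 0) (vw r s) t.
Definition ends (w : word) := V <= size w /\
  forall t, t < V -> nth (la 0) w (size w - V + t) = nth (la 0) (vw r s) t.

Lemma vpowS n : vpow r s n.+1 = vw r s ++ vpow r s n. Proof. by []. Qed.

Lemma nth_vpow n j t : j < n -> t < V -> nth (la 0) (vpow r s n) (j * V + t) = nth (la 0) (vw r s) t.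
Proof.
elim: n j => // n IH [|j] Hj Ht; rewrite vpowS nth_cat.
  by rewrite mul0n add0n Ht.
have -> : (j.+1 * V + t < V) = false by apply/negbTE; rewrite -leqNgt mulSn; lia.
have -> : j.+1 * V + t - V = j * V + t by rewrite mulSn; lia.
by apply: IH.
Qed.

Lemma Vpos' : 0 < V. Proof. case: r Hr => // r' _; by rewrite /vw /=. Qed.

Lemma good_vpow n : good (vpow r s n).
Proof.
move=> x t; rewrite size_vpow => Hx Ht.
have V0 := Vpos'.
have Hd := divn_eq x V; have Ho := ltn_pmod x V0.
move: Hd Ho; set q := x %/ V; set o := x %% V => Hd Ho.
have Hq : q.+3 <= n by rewrite -(leq_pmul2r V0); rewrite !mulSn; lia.
exists (q.+1 * V + t); first by rewrite mulSn; lia.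
by apply: nth_vpow => //; lia.
Qed.

Lemma starts_vpow n : 0 < n -> starts (vpow r s n).
Proof.
move=> Hn; rewrite /starts size_vpow; split; first by rewrite leq_pmull.
by move=> t Ht; have := nth_vpow (j := 0) Hn Ht; rewrite mul0n add0n.
Qed.

Lemma ends_vpow n : 0 < n -> ends (vpow r s n).
Proof.
move=> Hn; rewrite /ends size_vpow; split; first by rewrite leq_pmull.
move=> t Ht; have Hn1 : n.-1 < n by lia.
have := nth_vpow Hn1 Ht.
by have -> : n.-1 * V + t = n * V - V + t by case: n Hn {Hn1} => // n _; rewrite mulSn /=; lia.
Qed.

Lemma starts_cat u w : starts u -> starts (u ++ w).
Proof.
case=> H1 H2; split; first by rewrite size_cat; lia.
by move=> t Ht; rewrite nth_cat (leq_trans Ht H1) H2.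
Qed.

Lemma ends_cat u w : ends w -> ends (u ++ w).
Proof.
case=> H1 H2; split; first by rewrite size_cat; lia.
move=> t Ht; rewrite nth_cat size_cat.
have -> : (size u + size w - V + t < size u) = false by apply/negbTE; lia.
have -> : size u + size w - V + t - size u = size w - V + t by lia.
exact: H2.
Qed.

Lemma good_cat u c w : good u -> ends u -> good w -> starts w -> size c <= V -> good (u ++ c ++ w).
Proof.
move=> gu [eu1 eu] gw [sw1 sw] hc x t Hx Ht.
rewrite (size_cat u) (size_cat c) in Hx.
case: (leqP (x + 3 * V) (size u)) => H1.
  have [y Hy Ey] := gu x t H1 Ht.
  by exists y => //; rewrite nth_cat (_ : y < size u) //; lia.
case: (leqP (size u + size c) x) => H2.
  have [y Hy Ey] := gw (x - (size u + size c)) t ltac:(lia) Ht.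
  exists (y + (size u + size c)); first by lia.
  rewrite nth_cat (_ : y + (size u + size c) < size u = false); last by apply/negbTE; lia.
  rewrite nth_cat (_ : _ < size c = false); last by apply/negbTE; lia.
  by have -> : y + (size u + size c) - size u - size c = y by lia.
case: (leqP x (size u - V)) => H3.
  exists (size u - V + t); first by lia.
  by rewrite nth_cat (_ : size u - V + t < size u); [apply: eu | lia].
exists (size u + size c + t); first by lia.
rewrite nth_cat (_ : size u + size c + t < size u = false); last by apply/negbTE; lia.
rewrite nth_cat (_ : _ < size c = false); last by apply/negbTE; lia.
have -> : size u + size c + t - size u - size c = t by lia.
exact: sw.
Qed.
End Full.

Section Full2.
Variables r s S T : nat.
Hypotheses (Hr : 0 < r) (Hs : 0 < s) (HS : 0 < S) (HT : 0 < T).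
Local Notation V := (size (vw r s)).
Local Notation W := (word_of r s).

Lemma size_flat3 (f : nat -> word) l : (forall i, size (f i) = 3) -> size (flatten (map f l)) = 3 * size l.
Proof. move=> H; elim: l => //= a l IH; rewrite size_cat H IH; lia. Qed.
Lemma size_vw : V = 3 * r + 3 * s.
Proof. by rewrite /vw size_cat !size_flat3 // !size_iota. Qed.

Lemma WUb : W (Ub S) = vpow r s S ++ aw r ++ vpow r s S ++ bw s ++ vpow r s S.
Proof. by rewrite /Ub !W_cons W_nil cats0. Qed.

Lemma good_Ub : [/\ good r s (W (Ub S)), starts r s (W (Ub S)) & ends r s (W (Ub S))].
Proof.
have Hv := size_vw.
rewrite WUb; split.
- apply: good_cat => //; first exact: good_vpow.
  + exact: ends_vpow.
  + apply: good_cat => //; first exact: good_vpow.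
    * exact: ends_vpow.
    * exact: good_vpow.
    * exact: starts_vpow.
    * by rewrite size_bw; lia.
  + by apply: starts_cat => //; apply: starts_vpow.
  + by rewrite size_aw; lia.
- by apply: starts_cat => //; apply: starts_vpow.
- by do 4 (apply: ends_cat => //); apply: ends_vpow.
Qed.

Lemma good_Xf n : [/\ good r s (W (Xf S n.+1)), starts r s (W (Xf S n.+1)) & ends r s (W (Xf S n.+1))].
Proof.
have [g1 s1 e1] := good_Ub.
elim: n => [|n [g2 s2 e2]]; first by rewrite Xf1.
rewrite XfS word_of_cat; split.
- by rewrite -[W (Xf S n.+1)]cat0s; apply: good_cat.
- by apply: starts_cat.
- by apply: ends_cat.
Qed.

Lemma good_fs1 : good r s (W (fs1 S T)).
Proof.
case: T HT => // t _; have [g1 s1 e1] := good_Xf t.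
by rewrite /fs1 word_of_cat -[W (Xf S t.+1)]cat0s; apply: good_cat.
Qed.

Lemma good_fs2 : good r s (W (fs2 S T)).
Proof.
have Hv := size_vw.
case: T HT => // t _; have [g1 s1 e1] := good_Xf t.
rewrite /fs2 word_of_cat W_cons fwA; apply: good_cat => //.
by rewrite size_aw; lia.
Qed.

Lemma inW fs z : z \in W fs -> z \in vw r s.
Proof.
elim: fs => // f fs IH; rewrite W_cons mem_cat => /orP [|/IH //].
case: f => [||n] /=.
- move/mapP => [i Hi ->]; rewrite /vw mem_cat; apply/orP; left.
  apply/flattenP; exists [:: lc (2 * i - 1); la i; lc (2 * i)]; last by rewrite !inE eqxx orbT.
  by apply/mapP; exists i.
- move/mapP => [i Hi ->]; rewrite /vw mem_cat; apply/orP; right.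
  apply/flattenP; exists [:: lc (2 * r + 2 * i - 1); lb i; lc (2 * r + 2 * i)]; last by rewrite !inE eqxx orbT.
  by apply/mapP; exists i.
- by move/flattenP => [w' ]; rewrite mem_nseq => /andP [_ /eqP ->].
Qed.

Lemma jumped_full fs : good r s (W fs) -> forall x y, x + (3 * V + 1) <= y -> y < size (W fs) ->
  jumped (W fs) x y =i vw r s.
Proof.
move=> gw x y Hxy Hy z; apply/idP/idP.
- by rewrite /jumped => /mem_drop /mem_take; apply: inW.
- move=> Hz; have Hi : index z (vw r s) < V by rewrite index_mem.
  have [p Hp Ep] := gw x.+1 (index z (vw r s)) ltac:(lia) Hi.
  rewrite nth_index // in Ep.
  rewrite jumped_mk; [|lia|lia].
  apply/mapP; exists (p - x.+1); first by rewrite mem_iota; lia.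
  by have -> : x.+1 + (p - x.+1) = p by lia.
Qed.
End Full2.

Lemma find_mod N a x : 0 < N -> exists z, x <= z < x + N /\ z %% N = a %% N.
Proof.
move=> N0; elim: x => [|x [z [Hz Ez]]].
  by exists (a %% N); rewrite modn_mod ltn_pmod //.
case: (ltnP x z) => H.
  by exists z; split => //; lia.
exists (z + N); split; first by lia.
by rewrite modnDr.
Qed.

Lemma per_mod N a b : a %% N = b %% N -> a <= b -> exists t, b = a + t * N.
Proof.
move=> E H; exists (b %/ N - a %/ N); rewrite mulnBl.
have := leq_div2r N H => H2.
have H3 : a %/ N * N <= b %/ N * N by rewrite leq_mul2r H2 orbT.
have Ea := divn_eq a N; have Eb := divn_eq b N.
lia.
Qed.

Section Occs.
Variables r s m S T : nat.
Hypotheses (Hr : 0 < r) (Hs : 0 < s) (HS : 3 * m + 1 <= S) (HT : 2 <= T).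
Local Notation V := (size (vw r s)).
Local Notation W := (word_of r s).
Local Notation N := (size (W (Ub S))).
Local Notation A1 := (A1 r s m S T).
Local Notation A2 := (A2 r s m S T).

Lemma per rho a t : N + rho <= a -> a + t * N + rho + 3 * N <= 2 * (T * N) ->
  VE A1 A1 rho a (a + t * N).
Proof.
elim: t => [|t IH] Ha Hb.
  by rewrite mul0n addn0 => x y E _ _; have -> : y = x by lia.
apply: (VE_trans (q := a + t * N)); first by lia.
  by apply: IH; rewrite ?mulSn in Hb *; lia.
move=> x y E H1 H2; have -> : y = x + N by rewrite mulSn in E; lia.
by apply: C3 => //; rewrite mulSn in Hb; lia.
Qed.

Lemma per2 rho a b : a %% N = b %% N -> N + rho <= a -> N + rho <= b ->
  a + rho + 3 * N <= 2 * (T * N) -> b + rho + 3 * N <= 2 * (T * N) -> VE A1 A1 rho a b.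
Proof.
move=> E Ha Hb Ha' Hb'.
case: (leqP a b) => H.
  by have [t Et] := per_mod E H; rewrite Et; apply: per; lia.
have [t Et] := per_mod (esym E) (ltnW H).
by apply: VE_sym; rewrite Et; apply: per; lia.
Qed.

Variables (rho Dd : nat).
Hypotheses (Hrho : 3 * (m * V) + 3 * rho + 1 <= S * V) (HD : 5 * N <= Dd).

Lemma Occ12 p' : Dd <= p' -> p' + Dd <= 2 * (T * N) -> forall x, Dd <= x ->
  x + 5 * N + Dd <= 2 * (T * N) + r ->
  exists q', x <= q' < x + 5 * N /\ VE A1 A2 rho p' q'.
Proof.
move=> H1 H2 x H3 H4.
have HNe := @sizeN r s m S T Hr Hs HS HT; have N0 : 0 < N by lia.
case: (leqP (x + 2 * N) (T * N)) => Hc.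
- have [z [Hz Ez]] := find_mod p' x N0.
  exists z; split; first by lia.
  apply: (VE_trans (B := A1) (q := z)); first by lia.
    by apply: per2 => //; lia.
  move=> y y' E _ Hy; have -> : y' = y by lia.
  by apply: C1 => //; lia.
- have [z [Hz Ez]] := find_mod p' (x + 3 * N) N0.
  exists (z + r); split; first by lia.
  apply: (VE_trans (B := A1) (q := z)); first by lia.
    by apply: per2 => //; lia.
  move=> y y' E Hy _; have -> : y' = y + r by lia.
  by apply: C2 => //; lia.
Qed.

Lemma Occ21 q' : Dd <= q' -> q' + Dd <= 2 * (T * N) + r -> forall x, Dd <= x ->
  x + 5 * N + Dd <= 2 * (T * N) ->
  exists p', x <= p' < x + 5 * N /\ VE A2 A1 rho q' p'.
Proof.
move=> H1 H2 x H3 H4.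
have HNe := @sizeN r s m S T Hr Hs HS HT; have N0 : 0 < N by lia.
have [z [Hz1 Hz2 HV]] : exists z, [/\ N + rho <= z, z + rho + 3 * N <= 2 * (T * N) & VE A2 A1 rho q' z].
  case: (ltnP (q' + rho + m * V) (T * N)) => Hc1.
    exists q'; split; try lia.
    move=> y y' E _ Hy; have -> : y' = y by lia.
    by symmetry; apply: C1 => //; lia.
  case: (leqP (T * N + 2 * (m * V) + rho + r) q') => Hc2.
    exists (q' - r); split; try lia.
    move=> y y' E Hy _; have -> : y = y' + r by lia.
    by symmetry; apply: C2 => //; lia.
  exists (q' - (T * N - S * V) + N); split; try lia.
  move=> y y' E Hy1 Hy2.
  have -> : y = T * N - S * V + (y - (T * N - S * V)) by lia.
  have -> : y' = N + (y - (T * N - S * V)) by lia.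
  by apply: C4 => //; lia.
have [z' [Hz' Ez']] := find_mod z x N0.
exists z'; split; first by lia.
apply: (VE_trans (B := A1) (q := z)); first by lia.
  exact: HV.
by apply: (@per2 rho z z' (esym Ez')); lia.
Qed.
End Occs.

Local Notation VV r s := (size (vw r s)).
Local Notation NN r s S := (size (word_of r s (Ub S))).

Unset Implicit Arguments.
Theorem lemma14 (r s : nat) : 0 < r -> 0 < s ->
  forall m k : nat, 0 < k ->
  exists R : nat, 2 * m < R /\
    forall S T : nat, R <= S -> R <= T ->
      equivk r s m k (Xf S T ++ Xf S T) (Xf S T ++ Fa :: Xf S T).
Proof.
move=> Hr Hs m k Hk.
set kk := k.-1.
have V0 : 0 < (VV r s) by apply: (Vpos' s Hr).
exists (3 * m + 3 * (kk * (3 * (VV r s) + 1)) + 7 * kk + 20); split; first by lia.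
move=> S T HS HT.
have HS' : 3 * m + 1 <= S by lia.
have HT' : 2 <= T by lia.
have -> : k = kk.+1 by lia.
have HN := sizeN Hr Hs HS' HT'.
have HmV := mVN Hr Hs HS' HT'.
have s1 := size1 Hr Hs HS' HT'.
have s2 := size2 Hr Hs HS' HT'.
have Hrk : 3 * (m * (VV r s)) + 3 * (kk * (3 * (VV r s) + 1)) + 1 <= S * (VV r s).
  have : (3 * m + 3 * (kk * (3 * (VV r s) + 1)) + 1) * (VV r s) <= S * (VV r s) by rewrite leq_mul2r; apply/orP; right; lia.
  have : kk * (3 * (VV r s) + 1) <= kk * (3 * (VV r s) + 1) * (VV r s) by rewrite leq_pmulr.
  lia.
have HVN : 3 * (VV r s) + 1 <= (NN r s S).
  have : 1 * (VV r s) <= S * (VV r s) by rewrite leq_mul2r; apply/orP; right; lia.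
  lia.
have HNp := Npos Hr Hs HS' HT'.
have h6 : kk.+1 * (3 * (VV r s) + 1 + 5 * (NN r s S)) <= kk.+1 * (6 * (NN r s S)) by rewrite leq_mul2l; apply/orP; right; lia.
have h7 : kk * (3 * (VV r s) + 1) <= kk * (NN r s S) by rewrite leq_mul2l; apply/orP; right; lia.
have HTN : (7 * kk + 20) * (NN r s S) <= T * (NN r s S) by rewrite leq_mul2r; apply/orP; right; lia.
apply: (generic_equiv (d := 3 * (VV r s) + 1) (K := 3 * (VV r s) + 1 + 5 * (NN r s S)) (P := 5 * (NN r s S))
   (P0 := T * (NN r s S) - 2 * (m * (VV r s))) (Sig := vw r s)).
have Dk : D (3 * (VV r s) + 1 + 5 * (NN r s S)) kk = kk.+1 * (3 * (VV r s) + 1 + 5 * (NN r s S)) by [].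
have Rk : rho (3 * (VV r s) + 1) kk = kk * (3 * (VV r s) + 1) by [].
split; split.
- lia.
- lia.
- rewrite -/(fs1 S T) s1 Dk; lia.
- rewrite -/(fs2 S T) s2 Dk; lia.
- rewrite Dk Rk; lia.
- move=> x Hx; apply: (C1 Hr Hs HS' HT'); lia.
- rewrite -/(fs1 S T) -/(fs2 S T) s1 s2 => x y E Hx.
  have -> : y = x + r by lia.
  apply: (C2 Hr Hs HS' HT'); lia.
- split => x y Hxy Hy.
  + have S0 : 0 < S by lia. have T0 : 0 < T by lia.
    by apply: (jumped_full Hr Hs S0 T0 (good_fs1 Hr Hs S0 T0)); [lia | exact: Hy].
  + have S0 : 0 < S by lia. have T0 : 0 < T by lia.
    by apply: (jumped_full Hr Hs S0 T0 (good_fs2 Hr Hs S0 T0)); [lia | exact: Hy].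
- move=> j Hj.
  have Rj : rho (3 * (VV r s) + 1) j <= kk * (3 * (VV r s) + 1) by rewrite /rho leq_mul2r Hj orbT.
  have Dj : 5 * (NN r s S) <= D (3 * (VV r s) + 1 + 5 * (NN r s S)) j by rewrite /D mulSn; lia.
  split.
  + move=> p' H1 H2 x H3 H4.
    apply: (Occ12 Hr Hs HS' HT' (rho := rho (3 * (VV r s) + 1) j) (Dd := D (3 * (VV r s) + 1 + 5 * (NN r s S)) j)) => //; try lia.
    * by rewrite -/(fs1 S T) s1 in H2.
    * by rewrite -/(fs2 S T) s2 in H4.
  + move=> p' H1 H2 x H3 H4.
    apply: (Occ21 Hr Hs HS' HT' (rho := rho (3 * (VV r s) + 1) j) (Dd := D (3 * (VV r s) + 1 + 5 * (NN r s S)) j)) => //; try lia.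
    * by rewrite -/(fs2 S T) s2 in H2.
    * by rewrite -/(fs1 S T) s1 in H4.
Qed.
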